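(* Let $p$ be a prime, let $k\geq1$ and $s\geq 1$ be integers, and let $n=p^s+1$. Let $H$ be a pro-$p$ group satisfying one of the following conditions, where $I$ is an arbitrary index set and products carry the product topology: (1) $H\simeq\prod_I\mathbb{Z}/p^{s+1}\mathbb{Z}$; (2) $H\simeq U\rtimes V$ with $U=\prod_I\mathbb{Z}/p^{s+1}\mathbb{Z}$ and $V=\mathbb{Z}/p^{s+1}\mathbb{Z}$, and there is a generator $\sigma$ of $V$ such that $\sigma\tau\sigma^{-1}=\tau^{p^k+1}$ for all $\tau\in U$; (3) $p=2$, $H\simeq U\rtimes V$ with $U=\prod_I\mathbb{Z}/2^{s+1}\mathbb{Z}$, $V=\mathbb{Z}/2^{s+1}\mathbb{Z}$, and there is a generator $\sigma$ of $V$ with $\sigma\tau\sigma^{-1}=\tau^{-(2^k+1)}$ for all $\tau\in U$; (4) $p=2$, $H\simeq U\rtimes V$ with $U=\prod_I\mathbb{Z}/2^{s+1}\mathbb{Z}$, $V=\mathbb{Z}/2^{s+1}\mathbb{Z}$, and there is a generator $\sigma$ of $V$ with $\sigma\tau\sigma^{-1}=\tau^{-1}$ for all $\tau\in U$. Then for every $u\in H$ with $u\neq1$ there exists a continuous homomorphism $\rho\colon H\to\mathrm{U}_n(\mathbb{F}_p)$ with $\rho(u)\neq1$.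
   Context: $\mathrm{U}_n(\mathbb{F}_p)$ denotes the group of upper-triangular unipotent $n\times n$ matrices over $\mathbb{F}_p$. *)

(* Defs.v *)
From mathcomp Require Import all_boot all_order all_algebra.
From Stdlib Require List.
Set Implicit Arguments. Unset Strict Implicit. Unset Printing Implicit Defensive.
Import GRing.Theory.
Local Open Scope ring_scope.

(* The group H = U x| V with U = prod_I Z/qZ (written additively as
   functions I -> 'Z_q), V = Z/qZ = <sigma>, and sigma acting on U by
   tau |-> tau^e, i.e. multiplication by e in additive notation.
   An element (tau, a) stands for tau * sigma^a.  Product:
   (t1, a)(t2, b) = (t1 + e^a t2, a + b).
   (Well defined as a group law when e^q = 1 mod q, which holds in all four
   cases of the proposition; case (1) is e = 1, the direct product.) *)
Definition semidir_mul (I : Type) (q : nat) (e : int)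
  (x y : (I -> 'Z_q) * 'Z_q) : (I -> 'Z_q) * 'Z_q :=
  (fun i => x.1 i + ((e%:~R : 'Z_q) ^+ (nat_of_ord x.2)) * y.1 i, x.2 + y.2).

Definition semidir_one (I : Type) (q : nat) : (I -> 'Z_q) * 'Z_q :=
  (fun _ => 0, 0).

(* Continuity of a map from prod_I (Z/qZ) x Z/qZ (product topology of the
   discrete finite factors) into a discrete space, unfolded: every point has
   a basic open (cylinder) neighbourhood, fixing finitely many coordinates
   J of U and the V-coordinate, on which the map is constant. *)
Definition prod_locally_constant (I : Type) (q : nat) (T : Type)
  (f : (I -> 'Z_q) * 'Z_q -> T) : Prop :=
  forall x, exists J : seq I,
    forall y, (forall i, List.In i J -> y.1 i = x.1 i) -> y.2 = x.2 ->
      f y = f x.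

Definition upper_unitriangular (p n : nat) (A : 'M['F_p]_n) : Prop :=
  forall i j : 'I_n,
    ((j < i)%N -> A i j = 0) /\ (i = j -> A i j = 1).

Definition fun_locally_constant (I : Type) (q : nat) (T : Type)
  (f : (I -> 'Z_q) -> T) : Prop :=
  forall x, exists J : seq I,
    forall y, (forall i, List.In i J -> y i = x i) -> f y = f x.

(* Main.v *)
Require Import Defs.
From mathcomp Require Import all_boot all_order all_algebra.
From mathcomp Require Import zify ring.
Set Implicit Arguments. Unset Strict Implicit. Unset Printing Implicit Defensive.
Import GRing.Theory.
Local Open Scope ring_scope.

Definition Nmx (R : nzRingType) n : 'M[R]_n.+1 := \matrix_(i, j) ((i.+1 == j :> nat)%:R).

Lemma sum_ind (R : nzRingType) n (c : nat) (f : 'I_n.+1 -> R) :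
  \sum_(k < n.+1) ((k == c :> nat)%:R * f k) = if (c < n.+1)%N then f (inord c) else 0.
Proof.
case: ifP => hc.
  rewrite (bigD1 (inord c)) //= inordK // eqxx mul1r big1 ?addr0 // => k hk.
  case: eqP => [e|]; last by rewrite mul0r.
  by case/eqP: hk; apply: val_inj; rewrite /= inordK // e.
rewrite big1 // => k _; case: eqP => [e|]; last by rewrite mul0r.
by move: (ltn_ord k); rewrite e hc.
Qed.

Lemma NmxX (R : nzRingType) n a (i j : 'I_n.+1) :
  ((Nmx R n) ^+ a) i j = ((i + a == j)%N)%:R.
Proof.
elim: a i j => [|a IH] i j.
  by rewrite expr0 addn0 -idmxE mxE.
rewrite exprSr -mulmxE mxE.
under eq_bigr => k _ do rewrite IH mxE.
have -> : \sum_(k < n.+1) ((i + a == k)%N%:R * ((k.+1 == j :> nat)%:R : R)) =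
   \sum_(k < n.+1) ((k == (i + a)%N :> nat)%:R * ((k.+1 == j :> nat)%:R : R)).
  by apply: eq_bigr => k _; rewrite eq_sym.
rewrite sum_ind; case: ifP => h.
  by rewrite inordK // addnS.
case: eqP => // e; move: (ltn_ord j); rewrite -e; lia.
Qed.

Lemma NmxXn (R : nzRingType) n a : (n < a)%N -> (Nmx R n) ^+ a = 0.
Proof.
move=> h; apply/matrixP => i j; rewrite NmxX mxE.
case: eqP => // e; move: (ltn_ord j); rewrite -e.
lia.
Qed.

Lemma NmxX_row0 (R : nzRingType) n a (B : 'M[R]_n.+1) j :
  ((Nmx R n) ^+ a *m B) 0 j = if (a < n.+1)%N then B (inord a) j else 0.
Proof.
rewrite mxE -(sum_ind _ (fun k => B k j)); apply: eq_bigr => k _; rewrite NmxX /= add0n eq_sym //.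
Qed.

Definition UT (R : nzRingType) n (c : R) (A : 'M[R]_n.+1) :=
  forall i j : 'I_n.+1, ((j < i)%N -> A i j = 0) /\ (i = j -> A i j = c).

Lemma UT_mul (R : nzRingType) n c1 c2 (A B : 'M[R]_n.+1) :
  UT c1 A -> UT c2 B -> UT (c1 * c2) (A * B).
Proof.
move=> hA hB i j; split.
  move=> hji; rewrite -mulmxE mxE big1 // => k _.
  case: (ltnP k i) => hk; first by rewrite (proj1 (hA i k)) ?mul0r.
  by rewrite (proj1 (hB k j)) ?mulr0 // (leq_trans hji hk).
move=> <-; rewrite -mulmxE mxE (bigD1 i) //= (proj2 (hA i i)) // (proj2 (hB i i)) //.
rewrite big1 ?addr0 // => k hk.
case: (ltnP k i) => hki; first by rewrite (proj1 (hA i k)) ?mul0r.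
rewrite (proj1 (hB k i)) ?mulr0 // ltn_neqAle hki andbT.
by apply/negP => /eqP e; move/negP: hk; apply; apply/eqP/val_inj.
Qed.

Lemma UT_add (R : nzRingType) n c1 c2 (A B : 'M[R]_n.+1) :
  UT c1 A -> UT c2 B -> UT (c1 + c2) (A + B).
Proof.
move=> hA hB i j; split.
  by move=> h; rewrite mxE (proj1 (hA i j)) // (proj1 (hB i j)) // addr0.
by move=> h; rewrite mxE (proj2 (hA i j)) // (proj2 (hB i j)).
Qed.

Lemma UT_1 (R : nzRingType) n : UT (1 : R) (1 : 'M[R]_n.+1).
Proof.
move=> i j; rewrite -idmxE mxE; split.
  by move=> h; case: eqP => // e; move: h; rewrite e ltnn.
by move=> ->; rewrite eqxx.
Qed.

Lemma UT_0 (R : nzRingType) n : UT (0 : R) (0 : 'M[R]_n.+1).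
Proof. by move=> i j; rewrite mxE. Qed.

Lemma UT_X (R : nzRingType) n c (A : 'M[R]_n.+1) k : UT c A -> UT (c ^+ k) (A ^+ k).
Proof.
move=> h; elim: k => [|k IH]; first by rewrite !expr0; apply: UT_1.
by rewrite !exprSr; apply: UT_mul.
Qed.

Lemma UT_N (R : nzRingType) n : UT (0 : R) (Nmx R n).
Proof.
move=> i j; rewrite mxE; split.
  by move=> h; case: eqP => // e; move: h; rewrite -e ltnNge leqnSn.
by move=> ->; rewrite eqn_leq ltnn.
Qed.

Definition Jmx (R : nzRingType) n : 'M[R]_n.+1 := 1 + Nmx R n.

Lemma UT_J (R : nzRingType) n : UT (1 : R) (Jmx R n).
Proof. by rewrite -[1 : R]addr0; apply: UT_add; [apply: UT_1 | apply: UT_N]. Qed.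

Lemma comm_NJ (R : nzRingType) n : GRing.comm (Nmx R n) (Jmx R n).
Proof. by rewrite /Jmx /GRing.comm mulrDl mulrDr mul1r mulr1. Qed.

Definition ud (R : nzRingType) n d : 'M[R]_n.+1 := \sum_(k < d) (Jmx R n) ^+ k.

Lemma ud_N (R : nzRingType) n d : Nmx R n * ud R n d = Jmx R n ^+ d - 1.
Proof.
elim: d => [|d IH]; first by rewrite /ud big_ord0 mulr0 expr0 subrr.
rewrite /ud big_ord_recr /= mulrDr -/(ud R n d) IH.
have -> : Nmx R n = Jmx R n - 1 by rewrite /Jmx addrAC subrr add0r.
rewrite mulrBl mul1r -exprS.
by rewrite addrC addrA subrK.
Qed.

Lemma comm_Nud (R : nzRingType) n d : GRing.comm (Nmx R n) (ud R n d).
Proof. by apply: commr_sum => k _; apply/commrX/comm_NJ. Qed.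

Lemma UT_ud (R : nzRingType) n d : UT (d%:R : R) (ud R n d).
Proof.
elim: d => [|d IH]; first by rewrite /ud big_ord0; apply: UT_0.
rewrite /ud big_ord_recr /= -/(ud R n d) -addn1 natrD -[(1%N)%:R]/(1%:R : R).
apply: UT_add => //; rewrite -(expr1n R d); exact/UT_X/UT_J.
Qed.

Definition Tmx (R : nzRingType) n d : 'M[R]_n.+1 :=
  \matrix_(i, j) ((Jmx R n ^+ d - 1) ^+ i) 0 j.

Lemma NdX (R : nzRingType) n d k :
  (Jmx R n ^+ d - 1) ^+ k = Nmx R n ^+ k * ud R n d ^+ k.
Proof. by rewrite -ud_N exprMn_comm //; apply: comm_Nud. Qed.

Lemma Nd_n1 (R : nzRingType) n d : (Jmx R n ^+ d - 1) ^+ n.+1 = 0.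
Proof. by rewrite NdX NmxXn // mul0r. Qed.

Lemma T_mulr (R : nzRingType) n d (X : 'M[R]_n.+1) i j :
  (Tmx R n d *m X) i j = ((Jmx R n ^+ d - 1) ^+ i *m X) 0 j.
Proof. by rewrite !mxE; apply: eq_bigr => k _; rewrite mxE. Qed.

Lemma NmxMl (R : nzRingType) n (B : 'M[R]_n.+1) i j :
  (Nmx R n *m B) i j = if (i.+1 < n.+1)%N then B (inord i.+1) j else 0.
Proof.
rewrite mxE -(sum_ind _ (fun k => B k j)); apply: eq_bigr => k _.
by rewrite mxE eq_sym.
Qed.

Lemma TA (R : nzRingType) n d : Jmx R n * Tmx R n d = Tmx R n d * Jmx R n ^+ d.
Proof.
apply/matrixP => i j.
rewrite {1}/Jmx mulrDl mul1r -(subrK 1 (Jmx R n ^+ d)) mulrDr mulr1.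
rewrite mxE [in RHS]mxE addrC; congr (_ + _).
rewrite -!mulmxE NmxMl T_mulr mulmxE -exprSr.
case: ifP => h; first by rewrite mxE inordK.
have -> : i.+1 = n.+1 by move: (ltn_ord i) h; lia.
by rewrite Nd_n1 mxE.
Qed.

Lemma transp_X (R : nzRingType) (A X B : R) k : A * X = X * B -> A ^+ k * X = X * B ^+ k.
Proof.
move=> h; elim: k => [|k IH]; first by rewrite !expr0 mul1r mulr1.
by rewrite exprS -mulrA IH mulrA h -mulrA -exprS.
Qed.

Lemma transp_B1 (R : nzRingType) (A X B : R) : A * X = X * B -> (A - 1) * X = X * (B - 1).
Proof. by move=> h; rewrite mulrBl mulrBr h mul1r mulr1. Qed.

Lemma TB (R : nzRingType) n d1 d2 : Tmx R n d1 * Tmx R n d2 = Tmx R n (d2 * d1).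
Proof.
apply/matrixP => i j.
have h := transp_X i (transp_B1 (transp_X d1 (TA R n d2))).
rewrite -mulmxE T_mulr mulmxE h -mulmxE T_mulr expr0 mul1mx.
by rewrite mxE -exprM.
Qed.

Lemma T1 (R : nzRingType) n : Tmx R n 1 = 1.
Proof.
apply/matrixP => i j.
rewrite mxE expr1 {1}/Jmx addrAC subrr add0r NmxX -idmxE mxE /=.
by rewrite add0n.
Qed.

Lemma TUT (R : nzRingType) n d : (d%:R : R) = 1 -> UT 1 (Tmx R n d).
Proof.
move=> hd i j.
have := UT_X i (@UT_ud R n d); rewrite hd expr1n => hU.
rewrite mxE NdX -mulmxE NmxX_row0 ltn_ord inord_val; exact: hU.
Qed.

Lemma Gexp (R : nzRingType) (y : R) c : exists S, (1 + y) ^+ c = 1 + y *+ c + S * (y * y).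
Proof.
elim: c => [|c [S IH]]; first by exists 0; rewrite expr0 mulr0n addr0 mul0r addr0.
exists (S + c%:R + y * S).
rewrite exprS IH mulrDl mul1r !mulrDr mulrnAr mulrS mulr1.
rewrite !mulrDl mulr_natl mulrA.
set a := y *+ c; set b := S * (y * y); set d := (y * y) *+ c; set e := y * S * (y * y).
rewrite -!addrA; congr (_ + _).
rewrite /e !mulrA [RHS]addrCA; congr (_ + _); by rewrite addrCA.
Qed.

Lemma frob (p : nat) (hp : prime p) n (X : 'M['F_p]_n.+1) v :
  (1 + X) ^+ (p ^ v) = 1 + X ^+ (p ^ v).
Proof.
have ch : p \in [pchar 'M['F_p]_n.+1] by rewrite pchar_lalg pchar_Fp.
elim: v => [|v IH]; first by rewrite !expn0 !expr1.
rewrite expnSr !exprM IH -!(pFrobenius_autE ch) pFrobenius_autD_comm.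
  by rewrite pFrobenius_aut1.
exact/commr_sym/commr1.
Qed.

Lemma Jq (p : nat) (hp : prime p) n w : (n < p ^ w)%N -> Jmx 'F_p n ^+ (p ^ w) = 1.
Proof. by move=> h; rewrite /Jmx frob // NmxXn // addr0. Qed.

Lemma Jm_neq1 (p : nat) (hp : prime p) s m :
  (0 < m)%N -> (m < p ^ s.+1)%N -> Jmx 'F_p (p ^ s) ^+ m != 1.
Proof.
move=> m0 mq.
have p1 : (1 < p)%N by apply: prime_gt1.
set v := logn p m.
have hdv : (p ^ v %| m)%N by apply: pfactor_dvdnn.
set m' := (m %/ p ^ v)%N.
have hm : m = (p ^ v * m')%N by rewrite /m' mulnC divnK.
have hm' : ~~ (p %| m')%N.
  apply/negP => /dvdnP [r hr].
  have : (p ^ v.+1 %| m)%N by rewrite hm hr expnSr dvdn_mul // dvdn_mull.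
  by rewrite pfactor_dvdn // ltnn.
have hvs : (p ^ v <= p ^ s)%N.
  have h1 : (p ^ v <= m)%N by apply: dvdn_leq.
  rewrite leq_exp2l //; rewrite -ltnS -(ltn_exp2l _ _ p1); exact: leq_ltn_trans h1 mq.
have pv0 : (0 < p ^ v)%N by rewrite expn_gt0 (ltnW p1).
have [S hS] := Gexp (Nmx 'F_p (p ^ s) ^+ (p ^ v)) m'.
set M := Nmx 'F_p (p ^ s) ^+ (p ^ v).
have jlt : (p ^ v < (p ^ s).+1)%N by rewrite ltnS.
set jv : 'I_((p ^ s)%N).+1 := inord (p ^ v).
have jvE : (jv : nat) = (p ^ v)%N by rewrite inordK.
have e0 : ((0 : 'I_((p ^ s)%N).+1) == jv) = false.
  by apply/negP => /eqP/(congr1 val) => /= e; move: pv0; rewrite -jvE -e.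
have key : (1 + M *+ m' + S * (M * M)) 0 jv = m'%:R.
  rewrite !mxE e0 add0r mulmxnE big1 ?addr0.
    by rewrite /M NmxX jvE add0n eqxx.
  move=> k _; rewrite -exprD NmxX jvE.
  by case: eqP => [e|]; [move: e pv0; lia | rewrite mulr0].
rewrite hm exprM /Jmx frob // hS.
apply/negP => /eqP /matrixP /(_ 0 jv); rewrite key -idmxE mxE e0 => /eqP.
by rewrite -(dvdn_pcharf (pchar_Fp hp)) (negbTE hm').
Qed.

Lemma powp (R : comNzRingType) (p : nat) (w : R) j :
  exists w', (1 + p%:R * w) ^+ (p ^ j) = 1 + (p%:R : R) ^+ j.+1 * w'.
Proof.
elim: j => [|j [w' IH]]; first by exists w; rewrite expn0 expr1 expr1.
have [S hS] := Gexp ((p%:R : R) ^+ j.+1 * w') p.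
exists (w' + S * p%:R ^+ j * w' * w').
rewrite expnSr exprM IH hS.
rewrite !exprS -[_ *+ p]mulr_natr. move: (p%:R ^+ j : R) => Q. move: (p%:R : R) => P. ring.
Qed.

Lemma expr_modn (R : pzSemiRingType) (A : R) q k : A ^+ q = 1 -> A ^+ (k %% q) = A ^+ k.
Proof.
move=> h; rewrite {2}(divn_eq k q) exprD mulnC exprM h expr1n mul1r //.
Qed.

Lemma valZD q (x y : 'Z_q) : (1 < q)%N -> nat_of_ord (x + y) = (((x : nat) + (y : nat)) %% q)%N.
Proof. by move=> h /=; rewrite [X in (_ %% X)%N]Zp_cast. Qed.

Lemma valZM q (x y : 'Z_q) : (1 < q)%N -> nat_of_ord (x * y) = (((x : nat) * (y : nat)) %% q)%N.
Proof. by move=> h /=; rewrite [X in (_ %% X)%N]Zp_cast. Qed.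

Lemma valZ1 q : (1 < q)%N -> nat_of_ord (1 : 'Z_q) = 1%N.
Proof. by move=> h /=; rewrite [X in (_ %% X)%N]Zp_cast // modn_small. Qed.

Lemma JzD (R : pzSemiRingType) (A : R) q (x y : 'Z_q) : (1 < q)%N -> A ^+ q = 1 ->
  A ^+ (x + y)%R = A ^+ x * A ^+ y.
Proof. by move=> h1 h; rewrite valZD // expr_modn // exprD. Qed.

Lemma JzM (R : pzSemiRingType) (A : R) q (x y : 'Z_q) : (1 < q)%N -> A ^+ q = 1 ->
  A ^+ (x * y)%R = (A ^+ x) ^+ y.
Proof. by move=> h1 h; rewrite valZM // expr_modn // exprM. Qed.

Lemma fZD (p : nat) (hp : prime p) q (x y : 'Z_q) : (1 < q)%N -> (p %| q)%N ->
  ((nat_of_ord (x + y)%R)%:R : 'F_p) = (nat_of_ord x)%:R + (nat_of_ord y)%:R.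
Proof. by move=> h1 h2; rewrite valZD // -(Fp_nat_mod hp) modn_dvdm // Fp_nat_mod // natrD. Qed.

Lemma fZM (p : nat) (hp : prime p) q (x y : 'Z_q) : (1 < q)%N -> (p %| q)%N ->
  ((nat_of_ord (x * y)%R)%:R : 'F_p) = (nat_of_ord x)%:R * (nat_of_ord y)%:R.
Proof. by move=> h1 h2; rewrite valZM // -(Fp_nat_mod hp) modn_dvdm // Fp_nat_mod // natrM. Qed.

Lemma fZ1 (p : nat) q : (1 < q)%N -> ((nat_of_ord (1 : 'Z_q))%:R : 'F_p) = 1.
Proof. by move=> h; rewrite valZ1. Qed.

Lemma fZp (p : nat) (hp : prime p) q : (1 < q)%N -> (p %| q)%N ->
  ((nat_of_ord (p%:R : 'Z_q))%:R : 'F_p) = 0.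
Proof.
move=> h1 h2; rewrite val_Zp_nat // -(Fp_nat_mod hp) modn_dvdm // Fp_nat_mod //.
exact: pchar_Fp_0.
Qed.

Lemma fZ_one (p : nat) (hp : prime p) q (w : 'Z_q) : (1 < q)%N -> (p %| q)%N ->
  ((nat_of_ord (1 + p%:R * w)%R)%:R : 'F_p) = 1.
Proof. by move=> h1 h2; rewrite fZD // fZM // fZp // mul0r addr0 fZ1. Qed.

Lemma onepow (R : comNzRingType) (p : nat) (w : R) k :
  exists w', (1 + p%:R * w) ^+ k = 1 + p%:R * w'.
Proof.
elim: k => [|k [w' IH]]; first by exists 0; rewrite expr0 mulr0 addr0.
exists (w + w' + p%:R * w * w'); rewrite exprS IH.
move: (p%:R : R) => P; ring.
Qed.

Lemma E_form (p k s : nat) (hk : (1 <= k)%N) (e : int) :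
    e = (p ^ k + 1)%N%:Z
    \/ (p = 2%N /\ e = - ((2 ^ k + 1)%N%:Z))
    \/ (p = 2%N /\ e = -1) ->
  exists w : 'Z_(p ^ s.+1), (e%:~R : 'Z_(p ^ s.+1)) = 1 + p%:R * w.
Proof.
case: k hk => // k _.
case=> [->|[[-> ->]|[-> ->]]].
- exists (p%:R ^+ k); rewrite -pmulrn natrD natrX exprS.
  move: (p%:R : 'Z_(p ^ s.+1)) => P; ring.
- exists (-1 - 2%:R ^+ k); rewrite mulrNz -pmulrn natrD natrX exprS.
  move: (2%:R ^+ k : 'Z_(2 ^ s.+1)) => Q; ring.
- by exists (-1); rewrite mulrN1 -[2%:R]/(1 + 1 : 'Z_(2 ^ s.+1)) opprD addrA subrr add0r.
Qed.

From Stdlib Require Import Classical FunctionalExtensionality.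

Lemma exists_nz (I : Type) q (u : I -> 'Z_q) : u <> (fun _ => 0) -> exists i, u i != 0.
Proof.
move=> h; apply: NNPP => hn; apply: h; apply: functional_extensionality => i.
by case: (eqVneq (u i) 0) => // hi; exfalso; apply: hn; exists i.
Qed.

Lemma T_mod (R : nzRingType) n q d : Jmx R n ^+ q = 1 -> Tmx R n (d %% q) = Tmx R n d.
Proof. by move=> h; rewrite /Tmx expr_modn. Qed.

Lemma val_lt (q : nat) (z : 'Z_q) : (1 < q)%N -> (nat_of_ord z < q)%N.
Proof. by move=> h; move: (ltn_ord z); rewrite [X in (_ < X)%N -> _]Zp_cast. Qed.

Lemma val_pos (q : nat) (z : 'Z_q) : z != 0 -> (0 < nat_of_ord z)%N.
Proof. by rewrite lt0n; apply: contra => /eqP h; apply/eqP/val_inj. Qed.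

Lemma semidir_mul1 (I : Type) q (e : int) (x y : (I -> 'Z_q) * 'Z_q) i :
  (semidir_mul e x y).1 i = x.1 i + ((e%:~R : 'Z_q) ^+ x.2) * y.1 i.
Proof. by []. Qed.

Lemma semidir_mul2 (I : Type) q (e : int) (x y : (I -> 'Z_q) * 'Z_q) :
  (semidir_mul e x y).2 = x.2 + y.2.
Proof. by []. Qed.

Theorem proposition5p1 (p k s : nat) (I : Type)
  (hp : prime p) (hk : (1 <= k)%N) (hs : (1 <= s)%N) :
  (* case (1): H = prod_I Z/p^(s+1) (written additively) *)
  (forall u : I -> 'Z_(p ^ s.+1), u <> (fun _ => 0) ->
    exists rho : (I -> 'Z_(p ^ s.+1)) -> 'M['F_p]_(p ^ s + 1),
      (forall x, upper_unitriangular (rho x)) /\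
      (forall x y, rho (fun i => x i + y i) = rho x *m rho y) /\
      fun_locally_constant rho /\
      rho u <> 1%:M) /\
  (* cases (2), (3), (4): H = U x| V, sigma tau sigma^-1 = tau^e *)
  (forall e : int,
    e = (p ^ k + 1)%N%:Z
    \/ (p = 2%N /\ e = - ((2 ^ k + 1)%N%:Z))
    \/ (p = 2%N /\ e = -1) ->
    forall u : (I -> 'Z_(p ^ s.+1)) * 'Z_(p ^ s.+1),
    u <> semidir_one I (p ^ s.+1) ->
    exists rho : (I -> 'Z_(p ^ s.+1)) * 'Z_(p ^ s.+1) -> 'M['F_p]_(p ^ s + 1),
      (forall x, upper_unitriangular (rho x)) /\
      (forall x y, rho (semidir_mul e x y) = rho x *m rho y) /\
      prod_locally_constant rho /\
      rho u <> 1%:M).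
Proof.
rewrite addn1.
have p1 : (1 < p)%N by apply: prime_gt1.
set q := (p ^ s.+1)%N.
have q1 : (1 < q)%N by rewrite /q -(expn0 p) ltn_exp2l.
have nq : (p ^ s < q)%N by rewrite /q ltn_exp2l.
have pq : (p %| q)%N by rewrite /q expnS dvdn_mulr.
set J := Jmx 'F_p (p ^ s).
have Jq1 : J ^+ q = 1 by apply: Jq.
have UTJ : forall t, UT 1 (J ^+ t) by move=> t; rewrite -(expr1n _ t); apply/UT_X/UT_J.
have Jne : forall z : 'Z_q, z != 0 -> J ^+ z != 1.
  by move=> z hz; apply: Jm_neq1 => //; [apply: val_pos | apply: val_lt].
split.
  move=> u /exists_nz [i0 hi0].
  exists (fun x => J ^+ (x i0)); split; [|split; [|split]].
  - by move=> x; apply: UTJ.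
  - by move=> x y; rewrite mulmxE JzD.
  - by move=> x; exists [:: i0] => y hy; rewrite hy //=; left.
  - by move/eqP; rewrite idmxE; apply/negP/Jne.
move=> e he u hu.
set E := (e%:~R : 'Z_q).
have [w hw] := E_form s hk he.
have Eq1 : E ^+ q = 1.
  have [w' hw'] := @powp _ p w s.+1.
  rewrite /E hw -/q hw' exprSr -natrX pchar_Zp // mul0r mul0r addr0 //.
set D := E ^+ q.-1.
have DE : forall a, D ^+ a * E ^+ a = 1.
  by move=> a; rewrite -exprMn /D -exprSr prednK ?Eq1 ?expr1n // ltnW.
have Dq1 : D ^+ q = 1 by rewrite /D -exprM mulnC exprM Eq1 expr1n.
have Done : forall a, exists w', D ^+ a = 1 + p%:R * w'.
  by move=> a; rewrite /D -exprM /E hw; apply: onepow.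
set T := fun a : 'Z_q => Tmx 'F_p (p ^ s) (D ^+ a).
have UTT : forall a, UT 1 (T a).
  by move=> a; have [w' hw'] := Done a; apply: TUT; rewrite hw' fZ_one.
have TT : forall a b : 'Z_q, T (a + b) = T a * T b.
  move=> a b; rewrite /T TB mulnC -[in RHS](T_mod _ Jq1) -valZM // -exprD.
  by rewrite valZD // (expr_modn _ Dq1).
have TJ : forall (a t : 'Z_q), T a * J ^+ t = J ^+ (E ^+ a * t)%R * T a.
  move=> a t; rewrite JzM //.
  have h1 := transp_X (E ^+ a) (TA 'F_p (p ^ s) (D ^+ a)).
  rewrite -JzM // DE valZ1 // expr1 in h1.
  by rewrite (transp_X t h1).
have T0 : T 0 = 1 by rewrite /T expr0 valZ1 // T1.
case: (eqVneq u.2 0) => ha; last first.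
  exists (fun x : (I -> 'Z_q) * 'Z_q => J ^+ x.2); split; [|split; [|split]].
  - by move=> x; apply: UTJ.
  - by move=> x y; rewrite mulmxE semidir_mul2 JzD.
  - by move=> x; exists [::] => y _ ->.
  - by move/eqP; rewrite idmxE; apply/negP/Jne.
have : u.1 <> (fun _ => 0).
  by move=> h1; apply: hu; case: u ha h1 => t a /= -> ->.
move/exists_nz => [i0 hi0].
exists (fun x : (I -> 'Z_q) * 'Z_q => J ^+ (x.1 i0) * T x.2); split; [|split; [|split]].
- by move=> x; have := UT_mul (UTJ (x.1 i0)) (UTT x.2); rewrite mulr1.
- move=> x y; rewrite mulmxE semidir_mul1 semidir_mul2 JzD // TT !mulrA.
  by rewrite -[J ^+ _ * J ^+ _ * T x.2]mulrA -TJ mulrA.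
- by move=> x; exists [:: i0] => y hy ->; rewrite hy //=; left.
- by rewrite ha T0 mulr1; move/eqP; rewrite idmxE; apply/negP/Jne.
Qed.
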